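(* Let $d\ge 3$, $n\ge 2$, and let $F$ be an $n$-lattice framework in $\mathbb{R}^d$. If for every $1\le i\le d$ and every $0\le c\le n-1$ the framework $F'_{i,c}$ in $\mathbb{R}^{d-1}$ is infinitesimally rigid, then $F$ is infinitesimally rigid.
   Context: A framework in $\mathbb{R}^d$ is a finite graph whose vertices (joints) are distinct points of $\mathbb{R}^d$ and whose edges (bars) are segments between pairs of joints. An infinitesimal motion of $\mathbb{R}^d$ is a map $f:\mathbb{R}^d\to\mathbb{R}^d$ with $(f(x)-f(y))\cdot(x-y)=0$ for all $x,y$. For a framework $F$ with joint set $X$, an infinitesimal motion of $F$ is a map $g:X\to\mathbb{R}^d$ with $(g(x)-g(y))\cdot(x-y)=0$ for every bar $xy$; $F$ is infinitesimally rigid if every infinitesimal motion of $F$ is the restriction to $X$ of an infinitesimal motion of $\mathbb{R}^d$. An $n$-lattice framework in $\mathbb{R}^d$ is a framework whose joints are the points $(x_1,\ldots,x_d)$ with all $x_i\in\{0,1,\ldots,n-1\}$ (bars arbitrary). For such $F$, $F_{i,c}$ is the subframework induced by all joints whose $i$-th coordinate equals $c$, and $F'_{i,c}$ is the framework in $\mathbb{R}^{d-1}$ obtained from $F_{i,c}$ by deleting the $i$-th coordinate of every joint (keeping the same bars); it is an $n$-lattice framework in $\mathbb{R}^{d-1}$. *)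

(* Defs.v *)
From HB Require Import structures.
From mathcomp Require Import all_boot all_order all_algebra.
From mathcomp Require Import reals.
Set Implicit Arguments. Unset Strict Implicit. Unset Printing Implicit Defensive.
Import Order.TTheory GRing.Theory Num.Theory.
Local Open Scope ring_scope.

Section Defs.
Variable R : realType.

Definition dot (d : nat) (u v : 'rV[R]_d) : R := \sum_(j < d) u 0 j * v 0 j.

Definition inf_motion_space (d : nat) (f : 'rV[R]_d -> 'rV[R]_d) : Prop :=
  forall x y : 'rV[R]_d, dot (f x - f y) (x - y) = 0.

Definition lattice (d n : nat) := {ffun 'I_d -> 'I_n}.

Definition pt (d n : nat) (p : lattice d n) : 'rV[R]_d :=
  \row_(j < d) ((p j : nat)%:R).

(* an n-lattice framework in R^d is given by its bar relation on the joints;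
   F x y means that there is a bar between x and y *)
Definition inf_motion_lattice (d n : nat) (F : rel (lattice d n))
  (g : lattice d n -> 'rV[R]_d) : Prop :=
  forall x y, F x y -> dot (g x - g y) (pt x - pt y) = 0.

Definition inf_rigid (d n : nat) (F : rel (lattice d n)) : Prop :=
  forall g : lattice d n -> 'rV[R]_d, inf_motion_lattice F g ->
  exists f : 'rV[R]_d -> 'rV[R]_d,
    inf_motion_space f /\ forall x, g x = f (pt x).
End Defs.

Definition ins_coord (d n : nat) (i : 'I_d.+1) (c : 'I_n) (q : lattice d n)
  : lattice d.+1 n :=
  [ffun j => if unlift i j is Some k then q k else c].

(* F'_{i,c}: subframework induced on joints with i-th coordinate c,
   with the i-th coordinate deleted *)
Definition section_fw (d n : nat) (F : rel (lattice d.+1 n)) (i : 'I_d.+1)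
  (c : 'I_n) : rel (lattice d n) :=
  fun q1 q2 => F (ins_coord i c q1) (ins_coord i c q2).

(* Main.v *)
Require Import Defs.
From HB Require Import structures.
From mathcomp Require Import all_boot all_order all_algebra reals.
From mathcomp Require Import ring lra.
Set Implicit Arguments. Unset Strict Implicit. Unset Printing Implicit Defensive.
Import Order.TTheory GRing.Theory Num.Theory.
Local Open Scope ring_scope.

Section A.
Variable R : realType.

Lemma dotBl m (u v w : 'rV[R]_m) : dot (u - v) w = dot u w - dot v w.
Proof. by rewrite /dot -sumrB; apply: eq_bigr => i _; rewrite !mxE mulrBl. Qed.
Lemma dotBr m (u v w : 'rV[R]_m) : dot w (u - v) = dot w u - dot w v.
Proof. by rewrite /dot -sumrB; apply: eq_bigr => i _; rewrite !mxE mulrBr. Qed.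
Lemma dotC m (u v : 'rV[R]_m) : dot u v = dot v u.
Proof. by rewrite /dot; apply: eq_bigr => i _; rewrite mulrC. Qed.
Lemma dot_delta m (u : 'rV[R]_m) k : dot u (delta_mx 0 k) = u 0 k.
Proof.
rewrite /dot (bigD1 k) //= big1 ?addr0; first by rewrite mxE !eqxx mulr1.
by move=> i /negbTE Hi; rewrite mxE Hi andbF mulr0.
Qed.

Lemma motion_diff m (f : 'rV[R]_m -> 'rV[R]_m) : inf_motion_space f ->
  (forall u v l, f u 0 l - f v 0 l =
    \sum_k (u 0 k - v 0 k) * (f (delta_mx 0 k) 0 l - f 0 0 l)) /\
  (forall k l, f (delta_mx 0 k) 0 l - f 0 0 l = - (f (delta_mx 0 l) 0 k - f 0 0 k)).
Proof.
move=> Hf.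
pose h x := f x - f 0.
have hx0 x : dot (h x) x = 0.
  by have := Hf x 0; rewrite subr0.
have anti x y : dot (h x) y = - dot (h y) x.
  have := Hf x y.
  have -> : f x - f y = h x - h y by rewrite /h opprB addrA subrK.
  rewrite dotBl !dotBr !hx0 => H; lra.
have entry x l : h x 0 l = \sum_k x 0 k * h (delta_mx 0 k) 0 l.
  rewrite -dot_delta anti /dot -sumrN; apply: eq_bigr => k _.
  rewrite mulrC -mulrN; congr (_ * _).
  by rewrite -!dot_delta anti opprK.
split.
  move=> u v l.
  have -> : f u 0 l - f v 0 l = h u 0 l - h v 0 l.
    by rewrite /h !mxE; lra.
  rewrite !entry -sumrB; apply: eq_bigr => k _; rewrite mulrBl /h !mxE.
  done.
move=> k l.
have := anti (delta_mx 0 k) (delta_mx 0 l).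
by rewrite !dot_delta /h !mxE.
Qed.

Definition del d n (j : 'I_d.+1) (x : lattice d.+1 n) : lattice d n :=
  [ffun k => x (lift j k)].

Lemma ins_del d n (j : 'I_d.+1) (c : 'I_n) (x : lattice d.+1 n) : x j = c -> ins_coord j c (del j x) = x.
Proof.
move=> Hx; apply/ffunP => t; rewrite ffunE.
by case: unliftP => [k ->|->]; rewrite ?ffunE.
Qed.

Lemma sec_form d n (F : rel (lattice d.+1 n)) (g : lattice d.+1 n -> 'rV[R]_d.+1)
  (j : 'I_d.+1) (c : 'I_n) :
  inf_motion_lattice F g -> inf_rigid R (section_fw F j c) ->
  exists H : 'I_d.+1 -> 'I_d.+1 -> R,
  (forall x y : lattice d.+1 n, x j = c -> y j = c -> forall l, l != j ->
     g x 0 l - g y 0 l = \sum_k (((x k : nat)%:R - (y k : nat)%:R) * H k l)) /\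
  (forall k l, k != j -> l != j -> H k l = - H l k).
Proof.
move=> Hg Hsec.
pose g' q := \row_k' g (ins_coord j c q) 0 (lift j k').
have Hg' : inf_motion_lattice (section_fw F j c) g'.
  move=> q1 q2 /Hg; rewrite /dot (bigD1_ord j) //= !mxE !ffunE unlift_none subrr mulr0 add0r.
  move=> H; rewrite -[X in _ = X]H; apply: eq_bigr => i _ /=; rewrite !mxE !ffunE liftK //.
have [f' [Hf' Hgf]] := Hsec g' Hg'.
have [Hdiff Hskew] := motion_diff Hf'.
pose N k' l' := f' (delta_mx 0 k') 0 l' - f' 0 0 l'.
exists (fun k l => match unlift j k, unlift j l with Some k', Some l' => N k' l' | _, _ => 0 end).
split.
  move=> x y Hx Hy l; rewrite eq_sym => Hl.
  case: (unlift_some Hl) => l' -> Hul.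
  have gx (z : lattice d.+1 n) : z j = c -> g z 0 (lift j l') = f' (pt R (del j z)) 0 l'.
    by move=> Hz; rewrite -Hgf mxE ins_del.
  rewrite (gx x Hx) (gx y Hy) Hdiff.
  rewrite (bigD1_ord j) //= unlift_none mulr0 add0r.

  by apply: eq_bigr => k' _; rewrite !liftK !mxE !ffunE.
move=> k l; rewrite eq_sym => Hk; rewrite eq_sym => Hl.
case: (unlift_some Hk) => k' -> ->.
case: (unlift_some Hl) => l' -> ->.
exact: Hskew.
Qed.


Lemma third m (k l : 'I_m.+3) : exists j, j != k /\ j != l.
Proof.
case: (eqVneq k l) => [<-|Hkl].
  by exists (lift k ord0); rewrite eq_sym neq_lift.
case: (unlift_some Hkl) => i0 -> _.
exists (lift k (lift i0 ord0)); split; first by rewrite eq_sym neq_lift.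
apply/negP => /eqP /lift_inj /eqP; by rewrite eq_sym (negbTE (neq_lift _ _)).
Qed.

Definition upd D N (x : lattice D N) (i : 'I_D) (v : 'I_N) : lattice D N :=
  [ffun t => if t == i then v else x t].

Lemma sum_diff1 D N (x y : lattice D N) m (G : 'I_D -> R) :
  (forall i, i != m -> x i = y i) ->
  \sum_i (((x i : nat)%:R - (y i : nat)%:R) * G i) = ((x m : nat)%:R - (y m : nat)%:R) * G m.
Proof.
move=> H; rewrite (bigD1 m) //= big1 ?addr0 // => i Hi.
by rewrite (H i Hi) subrr mul0r.
Qed.

Variables (d n : nat) (F : rel (lattice d.+3 n.+2)) (g : lattice d.+3 n.+2 -> 'rV[R]_d.+3).
Hypothesis Hg : inf_motion_lattice F g.
Hypothesis Hsec : forall j c, inf_rigid R (section_fw F j c).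

Definition z0 : lattice d.+3 n.+2 := [ffun _ => ord0].
Definition one : 'I_n.+2 := @Ordinal n.+2 1 isT.
Definition Mx j c k l := g (upd (upd z0 j c) k one) 0 l - g (upd z0 j c) 0 l.
Definition S k l := g (upd z0 k one) 0 l - g z0 0 l.

Lemma upd_z0 j : upd z0 j ord0 = z0.
Proof. by apply/ffunP => t; rewrite !ffunE; case: ifP. Qed.

Lemma sec j c : 
  (forall x y : lattice d.+3 n.+2, x j = c -> y j = c -> forall l, l != j ->
     g x 0 l - g y 0 l = \sum_k (((x k : nat)%:R - (y k : nat)%:R) * Mx j c k l)) /\
  (forall k l, k != j -> l != j -> Mx j c k l = - Mx j c l k).
Proof.
have [H [HH Hsk]] := sec_form Hg (@Hsec j c).
have MH k l : k != j -> l != j -> Mx j c k l = H k l.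
  move=> Hk Hl; rewrite /Mx (HH _ _ _ _ l Hl); last 2 first.
  - by rewrite !ffunE eq_sym (negbTE Hk) eqxx.
  - by rewrite !ffunE eqxx.
  rewrite (sum_diff1 (m := k)); last by move=> i Hi; rewrite ffunE (negbTE Hi).
  by rewrite !ffunE eqxx (negbTE Hk) /= subr0 mul1r.
split.
  move=> x y Hx Hy l Hl; rewrite (HH _ _ Hx Hy l Hl); apply: eq_bigr => k _.
  case: (eqVneq k j) => [->|Hk]; first by rewrite Hx Hy subrr !mul0r.
  by rewrite MH.
by move=> k l Hk Hl; rewrite !MH // Hsk.
Qed.

Lemma Mdiag j c l : l != j -> Mx j c l l = 0.
Proof. move=> Hl; have := (sec j c).2 l l Hl Hl; lra. Qed.

Lemma Eq1 m k l a : k != m -> l != m -> l != k ->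
  Mx m a k l - Mx m ord0 k l = (a : nat)%:R * (Mx k one m l - Mx k ord0 m l).
Proof.
move=> Hkm Hlm Hlk.
set x := upd (upd z0 m a) k one; set y := upd (upd z0 m ord0) k one.
set x' := upd z0 m a; set y' := upd z0 m ord0.
have h1 : g x 0 l - g y 0 l = (a : nat)%:R * Mx k one m l.
  rewrite ((sec k one).1 x y) //; last 2 first.
  - by rewrite /x ffunE eqxx.
  - by rewrite /y ffunE eqxx.
  rewrite (sum_diff1 (m := m)); last first.
    by move=> i Hi; rewrite /x /y !ffunE; case: ifP => //; rewrite (negbTE Hi).
  by rewrite /x /y !ffunE eq_sym (negbTE Hkm) !eqxx subr0.
have h2 : g x' 0 l - g y' 0 l = (a : nat)%:R * Mx k ord0 m l.
  rewrite ((sec k ord0).1 x' y') //; last 2 first.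
  - by rewrite /x' !ffunE (negbTE Hkm).
  - by rewrite /y' !ffunE (negbTE Hkm).
  rewrite (sum_diff1 (m := m)); last first.
    by move=> i Hi; rewrite /x' /y' !ffunE (negbTE Hi).
  by rewrite /x' /y' !ffunE !eqxx subr0.
have -> : Mx m a k l - Mx m ord0 k l = (g x 0 l - g y 0 l) - (g x' 0 l - g y' 0 l).
  rewrite /Mx -/x -/y -/x' -/y'; lra.
rewrite h1 h2; lra.
Qed.

Definition X m k l := Mx m one k l - Mx m ord0 k l.

Lemma X_sym m k l : k != m -> l != m -> l != k -> X m k l = X k m l.
Proof. by move=> *; rewrite /X Eq1 // mul1r. Qed.

Lemma X_skew m k l : k != m -> l != m -> X m k l = - X m l k.
Proof.
move=> Hk Hl; rewrite /X ((sec m one).2 k l Hk Hl) ((sec m ord0).2 k l Hk Hl); lra.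
Qed.

Lemma X0 m k l : k != m -> l != m -> l != k -> X m k l = 0.
Proof.
move=> Hkm Hlm Hlk.
have Hmk : m != k by rewrite eq_sym.
have Hml : m != l by rewrite eq_sym.
have Hkl : k != l by rewrite eq_sym.
have e1 := X_sym Hkm Hlm Hlk.
have e2 := X_skew Hmk Hlk.
have e3 := X_sym Hlk Hmk Hml.
have e4 := X_skew Hkl Hml.
have e5 := X_sym Hml Hkl Hkm.
have e6 := X_skew Hkm Hlm.
lra.
Qed.

Lemma S_M j k l : S k l = Mx j ord0 k l.
Proof. by rewrite /Mx upd_z0. Qed.

Lemma Mconst m c k l : k != m -> l != m -> Mx m c k l = S k l.
Proof.
move=> Hkm Hlm.
case: (eqVneq l k) => [->|Hlk].
  by rewrite Mdiag // (S_M m) Mdiag.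
have := Eq1 c Hkm Hlm Hlk.
rewrite -/(X k m l) X0 //; last by rewrite eq_sym.
by rewrite mulr0 (S_M m) => /eqP; rewrite subr_eq0 => /eqP.
Qed.

Lemma S_skew k l : S k l = - S l k.
Proof.
have [j [Hjk Hjl]] := third k l.
by rewrite !(S_M j) (sec j ord0).2 // eq_sym.
Qed.

Lemma formula (x : lattice d.+3 n.+2) l :
  g x 0 l = g z0 0 l + \sum_k (x k : nat)%:R * S k l.
Proof.
have [m [Hml _]] := third l l.
set c := x m; set p := upd z0 m c.
have [j [Hjm Hjl]] := third m l.
have h1 : g x 0 l - g p 0 l = \sum_k (((x k : nat)%:R - (p k : nat)%:R) * S k l).
  rewrite ((sec m c).1 x p) //; last 2 first.
  - by rewrite /p ffunE eqxx.
  - by rewrite eq_sym.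
  apply: eq_bigr => k _.
  case: (eqVneq k m) => [->|Hk]; first by rewrite /p ffunE eqxx subrr !mul0r.
  by rewrite Mconst // eq_sym.
have h2 : g p 0 l - g z0 0 l = (c : nat)%:R * S m l.
  rewrite ((sec j ord0).1 p z0); [ | by rewrite /p !ffunE (negbTE Hjm) | by rewrite ffunE | by rewrite eq_sym].
  rewrite (sum_diff1 (m := m)); last by move=> i Hi; rewrite /p !ffunE (negbTE Hi).
  by rewrite /p !ffunE eqxx subr0 -S_M.
have h3 : \sum_k (((x k : nat)%:R - (p k : nat)%:R) * S k l) =
    \sum_k (x k : nat)%:R * S k l - (c : nat)%:R * S m l.
  have h4 : \sum_k (p k : nat)%:R * S k l = (c : nat)%:R * S m l.
    rewrite (bigD1 m) //= big1 ?addr0; first by rewrite /p ffunE eqxx.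
    by move=> i Hi; rewrite /p !ffunE (negbTE Hi) mul0r.
  by rewrite -h4 -sumrB; apply: eq_bigr => k _; rewrite mulrBl.
lra.
Qed.
End A.

Theorem corollary7 (R : realType) (d n : nat) (F : rel (lattice d.+1 n)) :
  (3 <= d.+1)%N -> (2 <= n)%N ->
  (forall (i : 'I_d.+1) (c : 'I_n), inf_rigid R (section_fw F i c)) ->
  inf_rigid R F.
Proof.
case: d F => [|[|d]] F // _.
case: n F => [|[|n]] F // _ Hsec g Hg.
pose Sm : 'M[R]_(d.+3) := \matrix_(k, l) S g k l.
exists (fun z => g (z0 d n) + z *m Sm); split.
  move=> x y.
  have -> : g (z0 d n) + x *m Sm - (g (z0 d n) + y *m Sm) = (x - y) *m Sm.
    by rewrite mulmxBl opprD addrACA subrr add0r.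
  set v := x - y.
  rewrite /dot.
  under eq_bigr do rewrite mxE big_distrl /=.
  set s := (X in X = 0).
  have : s = - s.
    rewrite {1}/s exchange_big /= /s -sumrN; apply: eq_bigr => k _.
    rewrite -sumrN; apply: eq_bigr => l _.
    by rewrite !mxE (S_skew Hg Hsec k l); ring.
  lra.
move=> x; apply/rowP => l.
rewrite !mxE (formula Hg Hsec x l); congr (_ + _).
by apply: eq_bigr => k _; rewrite !mxE.
Qed.
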